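(* Let $N\ge 3$ be odd, let $K=\tilde F(N)$, and let $\mathcal{A}$ be a $K\times N$ circular Florentine rectangle over $\mathbb{Z}_N$ with rows $\pi_0,\dots,\pi_{K-1}$. Let $L=N(N+1)$ and for $0\le m<K$ define the length-$L$ sequence $C^m=(c^m_0,\dots,c^m_{L-1})$ by $c^m_i=\omega_{N+1}^{\pi_m(\langle i\rangle_N)\cdot i}$, $0\le i<L$. Then: (1) $\theta_a=\theta_c=\theta_{\max}=N+1$, where $\theta_a=\max\{|\theta_{C^m}(\tau)|:0\le m<K,\ 0<\tau<L\}$, $\theta_c=\max\{|\theta_{C^m,C^{m'}}(\tau)|:0\le m\neq m'<K,\ 0\le\tau<L\}$ and $\theta_{\max}=\max\{\theta_a,\theta_c\}$; (2) with $\Omega=\{1+a(N+1):a\in\mathbb{Z}_N\}$, for every $m$ the frequency-domain dual $\widehat{C}^m=(\hat c^m_0,\dots,\hat c^m_{L-1})$ satisfies $\hat c^m_j=0$ for $j\in\Omega$ and $|\hat c^m_j|=\sqrt{(N+1)/N}$ for $j\notin\Omega$ (so each $C^m$ is a spectrally constrained sequence with forbidden carrier set $\Omega$).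
   Context: $\omega_n=e^{2\pi\sqrt{-1}/n}$; $\langle i\rangle_N$ is $i$ reduced mod $N$. An $M\times N$ circular Florentine rectangle (CFR) over $\mathbb{Z}_N$ is an $M\times N$ array whose rows $\pi_i:\mathbb{Z}_N\to\mathbb{Z}_N$ are permutations of $\mathbb{Z}_N$ such that for every $m\in\mathbb{Z}_N\setminus\{0\}$ and all $i,j$, $x,y\in\mathbb{Z}_N$: $(\pi_i(x),\pi_i(x+m))=(\pi_j(y),\pi_j(y+m))$ (indices mod $N$) iff $i=j$ and $x=y$. $\tilde F(N)$ denotes the largest $M$ for which an $M\times N$ CFR exists (for odd $N\ge3$, $\tilde F(N)\ge 2$). Frequency-domain dual: $\hat c_k=\frac{1}{\sqrt L}\sum_{t=0}^{L-1}c_t\omega_L^{-tk}$. Periodic correlation: $\theta_{C,D}(\tau)=\sum_{t=0}^{L-1}c_td^*_{\langle t+\tau\rangle_L}$, $\theta_C=\theta_{C,C}$. *)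

(* Defs.v *)
From HB Require Import structures.
From mathcomp Require Import all_boot all_order all_algebra all_fingroup.
From mathcomp Require Import reals trigo.
From mathcomp Require Import complex.
Set Implicit Arguments. Unset Strict Implicit. Unset Printing Implicit Defensive.
Import Order.TTheory GRing.Theory Num.Theory.
Local Open Scope ring_scope.
Local Open Scope complex_scope.

(* x + m in Z_N, for x : 'I_N (x witnesses N > 0) *)
Definition zshift (N : nat) (x : 'I_N) (m : nat) : 'I_N :=
  Ordinal (ltn_pmod (x + m) (leq_ltn_trans (leq0n x) (ltn_ord x))).

Definition is_CFR (M N : nat) (pi : 'I_M -> {perm 'I_N}) : Prop :=
  forall (m : nat), (0 < m < N)%N ->
  forall (i j : 'I_M) (x y : 'I_N),
    (pi i x, pi i (zshift x m)) = (pi j y, pi j (zshift y m)) <->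
    (i = j /\ x = y).

Definition is_Ftilde (N K : nat) : Prop :=
  (exists pi : 'I_K -> {perm 'I_N}, is_CFR pi) /\
  (forall (M : nat) (pi : 'I_M -> {perm 'I_N}), is_CFR pi -> (M <= K)%N).

Section Seqs.
Local Unset Implicit Arguments.
Variable R : realType.
Local Notation C := R[i].

Definition omega (n : nat) : C :=
  Complex (cos (2 * pi / n%:R)) (sin (2 * pi / n%:R)).

Definition pcorr (L : nat) (c d : nat -> C) (tau : nat) : C :=
  \sum_(t < L) c t * conjc (d ((t + tau) %% L)%N).

Definition fdual (L : nat) (c : nat -> C) (k : nat) : C :=
  ((Num.sqrt (L%:R : R))^-1)%:C * \sum_(t < L) c t * omega L ^- (t * k).

Definition theta_a (K L : nat) (c : 'I_K -> nat -> C) : R :=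
  \big[Num.max/0]_(m < K) \big[Num.max/0]_(tau < L | (0 < tau)%N)
     ComplexField.Normc.normc (pcorr L (c m) (c m) tau).

Definition theta_c (K L : nat) (c : 'I_K -> nat -> C) : R :=
  \big[Num.max/0]_(m < K) \big[Num.max/0]_(m' < K | m != m')
     \big[Num.max/0]_(tau < L) ComplexField.Normc.normc (pcorr L (c m) (c m') tau).

Definition theta_max (K L : nat) (c : 'I_K -> nat -> C) : R :=
  Num.max (theta_a K L c) (theta_c K L c).

End Seqs.
Arguments omega {R} n.
Arguments pcorr {R} L c d tau.
Arguments fdual {R} L c k.
Arguments theta_a {R} K L c.
Arguments theta_c {R} K L c.
Arguments theta_max {R} K L c.

(* Main.v *)
Require Import Defs.
From HB Require Import structures.
From mathcomp Require Import all_boot all_order all_algebra all_fingroup.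
From mathcomp Require Import reals trigo.
From mathcomp Require Import complex.
From mathcomp Require Import ring lra zify.
Import Order.TTheory GRing.Theory Num.Theory.
Local Open Scope ring_scope.
Local Open Scope complex_scope.

Section S.
Variable R : realType.
Local Notation C := R[i].
Local Notation normc := ComplexField.Normc.normc.

Lemma mulcE (a b c d : R) : (a +i* b) * (c +i* d) = (a*c - b*d) +i* (a*d + b*c) :> C.
Proof. by []. Qed.

Lemma cis_exp (a : R) k : (cos a +i* sin a)^+k = cos (k%:R*a) +i* sin(k%:R*a) :> C.
Proof.
elim: k => [|k IH]; first by rewrite expr0 !mul0r cos0 sin0.
rewrite exprSr IH mulcE -natr1 mulrDl mul1r cosD sinD; congr Complex; ring.
Qed.

Lemma omega_exp (n k : nat) :
  omega n ^+ k = Complex (cos (k%:R * (2 * pi / n%:R))) (sin (k%:R * (2 * pi / n%:R))) :> C.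
Proof. by rewrite /omega cis_exp. Qed.

Lemma cis_ne1 (x : R) : 0 < x < pi *+ 2 -> cos x = 1 -> sin x = 0 -> False.
Proof.
move=> /andP[x0 x2] c1 s0.
have pi0 := pi_gt0 R.
case: (ltgtP x pi) => hx.
- have := sin_gt0_pi (x:=x); rewrite s0 x0 hx ltxx; by move=> /(_ isT).
- have := sin_gt0_pi (x:=x - pi).
  have e : x = (x - pi) + pi by ring.
  rewrite e sinDpi in s0.
  have s0' : sin (x - pi) = 0 by lra.
  have -> : 0 < x - pi < pi by apply/andP; split; rewrite mulr2n in x2; lra.
  by move=> /(_ isT); rewrite s0' ltxx.
- by move: c1; rewrite hx cospi; lra.
Qed.

Lemma omega_n (n : nat) : (0 < n)%N -> omega n ^+ n = 1 :> C.
Proof.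
move=> n0; rewrite omega_exp.
have -> : n%:R * (2 * pi / n%:R) = pi *+ 2 :> R.
  have nn : n%:R != 0 :> R by rewrite pnatr_eq0 -lt0n.
  by rewrite mulrC divfK // mulr2n; ring.
by rewrite cos2pi sin2pi.
Qed.

Lemma omega_eq1 (n k : nat) : (0 < n)%N -> (omega n ^+ k == 1 :> C) = (n %| k)%N.
Proof.
move=> n0; rewrite {1}(divn_eq k n) exprD mulnC exprM omega_n // expr1n mul1r.
rewrite /dvdn; case: (k %% n)%N (ltn_pmod k n0) => [|r] hr; first by rewrite expr0 !eqxx.
rewrite /= omega_exp; apply/negbTE/negP => /eqP [c1 s1].
apply: (cis_ne1 _ _ c1 s1).
have pi0 := pi_gt0 R.
have nR : (0 : R) < n%:R by rewrite ltr0n.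
apply/andP; split.
  by rewrite mulr_gt0 ?divr_gt0 ?mulr_gt0 ?ltr0n.
rewrite mulrA ltr_pdivrMr //.
have h : (r.+1%:R : R) < n%:R by rewrite ltr_nat.
rewrite mulr2n; nra.
Qed.

Lemma omega_neq0 (n : nat) : (0 < n)%N -> omega n != 0 :> C.
Proof.
move=> n0; apply/eqP => e; have := omega_n _ n0; rewrite e expr0n.
rewrite eqn0Ngt n0 => /eqP; by rewrite eq_sym oner_eq0.
Qed.

Lemma omega_expz_eq1 (n : nat) (z : int) : (0 < n)%N ->
  (omega n ^ z == 1 :> C) = (n%:Z %| z)%Z.
Proof.
move=> n0; case: z => k.
  by rewrite -exprnP omega_eq1.
by rewrite NegzE -exprnN invr_eq1 omega_eq1 // /dvdz abszN.
Qed.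

Lemma omega_expz_mod (n : nat) (z1 z2 : int) : (0 < n)%N ->
  (n%:Z %| z1 - z2)%Z -> omega n ^ z1 = omega n ^ z2 :> C.
Proof.
move=> n0 h; rewrite -(subrK z2 z1) expfzDr ?omega_neq0 //.
by move: h; rewrite -omega_expz_eq1 // => /eqP ->; rewrite mul1r.
Qed.

Lemma normc_omega (n : nat) : normc (omega n : C) = 1.
Proof. by rewrite /omega /= cos2Dsin2 sqrtr1. Qed.

Lemma normc_exp (x : C) k : normc (x ^+ k) = normc x ^+ k.
Proof.
elim: k => [|k IH]; first by rewrite !expr0 ComplexField.Normc.normc1.
by rewrite !exprS ComplexField.Normc.normcM IH.
Qed.

Lemma normc_omegaz (n : nat) (z : int) : normc (omega n ^ z : C) = 1.
Proof.
case: z => k; first by rewrite -exprnP normc_exp normc_omega expr1n.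
by rewrite NegzE -exprnN ComplexField.Normc.normcV normc_exp normc_omega expr1n invr1.
Qed.

Lemma conj_omega (n : nat) : (0 < n)%N -> conjc (omega n) = (omega n)^-1 :> C.
Proof.
move=> n0; apply: (mulfI (omega_neq0 _ n0)); rewrite mulfV ?omega_neq0 //.
rewrite /omega /conjc mulcE; set a := 2 * pi / n%:R; have h := @cos2Dsin2 R a.
apply/eqP; rewrite eq_complex /=; apply/andP; split; apply/eqP; [rewrite -[X in _ = X]h|]; ring.
Qed.

Lemma conj_omegaX (n k : nat) : (0 < n)%N ->
  conjc (omega n ^+ k) = omega n ^ (- (k%:Z)) :> C.
Proof.
move=> n0; have -> : conjc (omega n ^+ k) = (conjc (omega n))^+k :> C by rewrite rmorphXn.
by rewrite conj_omega // exprnP exprz_inv.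
Qed.

Lemma geom_sum (q : C) (n : nat) : q ^+ n = 1 ->
  \sum_(s < n) q ^+ s = if q == 1 then n%:R else 0.
Proof.
move=> hq; case: eqP => [->|/eqP q1].
  by rewrite (eq_bigr (fun _ => 1)) ?sumr_const ?card_ord // => i _; rewrite expr1n.
have := subrX1 q n; rewrite hq subrr => /esym/eqP.
by rewrite mulf_eq0 subr_eq0 (negbTE q1) /= => /eqP.
Qed.

Lemma sum_split (F : nat -> C) (N P : nat) :
  \sum_(t < N * P) F t = \sum_(x < N) \sum_(s < P) F (x + N * s)%N.
Proof.
elim: P => [|P IH].
  by rewrite muln0 big_ord0 big1 // => i _; rewrite big_ord0.
rewrite mulnSr big_split_ord /= IH.
rewrite [RHS](eq_bigr (fun x : 'I_N => \sum_(s < P) F (x + N * s)%N + F (x + N * P)%N)); last first.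
  by move=> i _; rewrite big_ord_recr.
by rewrite big_split /=; congr (_ + _); apply: eq_bigr => i _; rewrite addnC.
Qed.

Lemma bigmax_le (I : finType) (Pr : pred I) (F : I -> R) (B : R) :
  0 <= B -> (forall i, Pr i -> F i <= B) -> \big[Num.max/0]_(i | Pr i) F i <= B.
Proof.
move=> B0 h; apply: (big_ind (fun v => v <= B)) => //.
by move=> x y hx hy; rewrite ge_max hx hy.
Qed.

Lemma bigmax_eq (I : finType) (Pr : pred I) (F : I -> R) (B : R) :
  0 <= B -> (forall i, Pr i -> F i <= B) -> (exists2 i, Pr i & F i = B) ->
  \big[Num.max/0]_(i | Pr i) F i = B.
Proof.
move=> B0 h [i Pi Fi]; apply/eqP; rewrite eq_le bigmax_le //=.
by rewrite (bigD1 i) //= Fi le_max lexx.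
Qed.

Lemma sum_one (I : finType) (b : pred I) (F : I -> C) (x0 : I) :
  b x0 -> (forall x, b x -> x = x0) ->
  \sum_(x : I) (if b x then F x else 0) = F x0.
Proof.
move=> bx0 u; rewrite (bigD1 x0) //= bx0 big1 ?addr0 // => y /eqP ny.
by case: ifP => // /u.
Qed.

Lemma sum_none (I : finType) (b : pred I) (F : I -> C) :
  (forall x, ~~ b x) -> \sum_(x : I) (if b x then F x else 0) = 0.
Proof. by move=> h; rewrite big1 // => x _; rewrite (negbTE (h x)). Qed.
End S.


Lemma dvd_small (P a b : nat) : (a < P)%N -> (b < P)%N ->
  ((P%:Z %| a%:Z - b%:Z)%Z = (a == b)).
Proof.
move=> ha hb; apply/idP/eqP => [|->]; last by rewrite subrr dvdz0.
rewrite /dvdz /=.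
have : (`|a%:Z - b%:Z| < P)%N by lia.
case E: `|a%:Z - b%:Z|%N => [|k] hk.
  by move=> _; move/eqP: E; rewrite absz_eq0 subr_eq0 => /eqP [].
move=> h; have := dvdn_leq (ltn0Sn k) (_ : (P %| k.+1)%N); move: h; rewrite -E => h; have := h; rewrite unfold_in /= => h2 /(_ h2); lia.
Qed.

Section Corr.
Variable R : realType.
Local Notation C := R[i].
Local Notation normc := ComplexField.Normc.normc.
Variables (N K : nat) (p : 'I_K -> {perm 'I_N}).
Hypothesis N0 : (0 < N)%N.

Definition cseq : 'I_K -> nat -> C := fun m i =>
    match insub (i %% N)%N : option 'I_N with
    | Some x => omega (N + 1) ^+ (p m x * i)
    | None => 0
    end.

Lemma cseqE m i (x : 'I_N) : val x = (i %% N)%N -> cseq m i = omega (N + 1) ^+ (p m x * i).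
Proof.
move=> hx; rewrite /cseq; case: insubP => [y _ hy|].
  by have -> : y = x by apply: val_inj; rewrite hy hx.
by rewrite ltn_pmod.
Qed.

Local Notation w := (omega (N + 1) : C).
Local Notation L := (N * (N + 1))%N.

Lemma wP : (0 < N + 1)%N. Proof. by rewrite addn1. Qed.

Lemma pcorrE m m' tau :
  pcorr L (cseq m) (cseq m') tau =
  \sum_(x : 'I_N) (if p m x == p m' (zshift x tau)
                   then (N + 1)%:R * w ^ (- ((p m' (zshift x tau) * tau)%N : int))
                   else 0).
Proof.
rewrite /pcorr (@sum_split R (fun t => cseq m t * conjc (cseq m' ((t + tau) %% L)%N))); apply: eq_bigr => x _.
set x' := zshift x tau.
set a := nat_of_ord (p m x); set b := nat_of_ord (p m' x').
pose d : int := a%:Z - b%:Z.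
pose A : int := d * x%:Z - (b * tau)%N%:Z.
have ha : (a < N + 1)%N by have := ltn_ord (p m x); rewrite /a; lia.
have hb : (b < N + 1)%N by have := ltn_ord (p m' x'); rewrite /b; lia.
have step : forall s : 'I_(N + 1),
   cseq m (x + N * s)%N * conjc (cseq m' ((x + N * s + tau) %% L)%N)
   = w ^ A * (w ^ (- d)) ^+ s.
  move=> s.
  rewrite (cseqE m _ x); last by rewrite /= addnC mulnC modnMDl modn_small.
  rewrite (cseqE m' _ x'); last first.
    rewrite /= modn_dvdm ?dvdn_mulr //.
    have -> : (x + N * s + tau = s * N + (x + tau))%N by lia.
    by rewrite modnMDl.
  rewrite conj_omegaX ?wP // (exprnP w (_ * _)%N) -expfzDr ?omega_neq0 ?wP //.
  rewrite (exprnP (w ^ (- d)) s) exprz_exp -expfzDr ?omega_neq0 ?wP //.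
  apply: omega_expz_mod; first exact: wP.
  set t := (x + N * s)%N.
  have Et := divn_eq (t + tau) L.
  set q := ((t + tau) %/ L)%N in Et; set r := ((t + tau) %% L)%N in Et *.
  have -> : (a * t)%N%:Z - (b * r)%N%:Z - (A + - d * s%:Z) =
     (N + 1)%N%:Z * (d * s%:Z + (b * N * q)%N%:Z).
    have Er : r%:Z = t%:Z + tau%:Z - (q * L)%N%:Z by lia.
    rewrite /A /d /t !PoszM Er !PoszD !PoszM; ring.
  by apply: dvdz_mulr; rewrite dvdzz.
rewrite (eq_bigr _ (fun s _ => step s)) -mulr_sumr geom_sum; last first.
  rewrite exprnP exprz_exp; apply/eqP; rewrite omega_expz_eq1 ?wP //.
  by apply: dvdz_mull; rewrite dvdzz.
have -> : (w ^ (- d) == 1) = (p m x == p m' x').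
  rewrite omega_expz_eq1 ?wP //.
  have -> : ((N + 1)%N%:Z %| - d)%Z = ((N + 1)%N%:Z %| d)%Z.
    by rewrite !unfold_in /= abszN.
  by rewrite dvd_small.
case: eqP => [e|]; last by rewrite mulr0.
have e' : a = b by rewrite /a /b e.
rewrite mulrC; congr (_ * _); congr (_ ^ _).
by rewrite /A /d e' subrr mul0r sub0r.
Qed.

Local Notation u := (omega L : C).

Lemma uN : u ^+ N = w.
Proof.
have e : N%:R * (2 * pi / L%:R) = 2 * pi / (N + 1)%:R :> R.
  have h1 : N%:R != 0 :> R by rewrite pnatr_eq0 -lt0n.
  have h2 : (N + 1)%:R != 0 :> R by rewrite pnatr_eq0 addn1.
  rewrite natrM; field; rewrite h1 andbT.
  by rewrite natrD in h2.
by rewrite omega_exp e.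
Qed.

Lemma fdualE m j : fdual L (cseq m) j =
  ((Num.sqrt (L%:R : R))^-1)%:C *
  \sum_(x : 'I_N) (if ((N + 1) %| p m x + j)%N
                   then (N + 1)%:R * u ^ ((((N * p m x)%N)%:Z - j%:Z) * x%:Z)
                   else 0).
Proof.
rewrite /fdual; congr (_ * _).
rewrite (@sum_split R (fun t => cseq m t * u ^- (t * j))); apply: eq_bigr => x _.
set a := nat_of_ord (p m x).
pose y : int := (N * a)%N%:Z - j%:Z.
have uP : (0 < L)%N by rewrite muln_gt0 N0 addn1.
have step : forall s : 'I_(N + 1),
   cseq m (x + N * s)%N * u ^- ((x + N * s) * j)%N = u ^ (y * x) * (w ^ y) ^+ s.
  move=> s.
  rewrite (cseqE m _ x); last by rewrite /= addnC mulnC modnMDl modn_small.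
  rewrite -uN -exprM exprnN (exprnP u (N * _)%N) -expfzDr ?omega_neq0 //.
  rewrite (exprnP u N) exprz_exp (exprnP _ s) exprz_exp -expfzDr ?omega_neq0 //.
  congr (_ ^ _); rewrite /y /a !PoszM !PoszD !PoszM; ring.
rewrite (eq_bigr _ (fun s _ => step s)) -mulr_sumr geom_sum; last first.
  rewrite exprnP exprz_exp; apply/eqP; rewrite omega_expz_eq1 ?wP //.
  by apply: dvdz_mull; rewrite dvdzz.
have -> : (w ^ y == 1) = ((N + 1) %| a + j)%N.
  rewrite (@omega_expz_mod R _ y (- (a + j)%N%:Z)) ?wP //; last first.
    have -> : y - - (a + j)%N%:Z = (N + 1)%N%:Z * a%:Z.
      by rewrite /y !PoszM !PoszD; ring.
    by apply: dvdz_mulr; rewrite dvdzz.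
  by rewrite omega_expz_eq1 ?wP // !unfold_in /= abszN.
by case: ifP => _; rewrite ?mulr0 // mulrC.
Qed.
End Corr.

Local Close Scope ring_scope.
Local Close Scope complex_scope.


Lemma modn_2 (N y : nat) : (y < N + N)%N -> (y %% N = if (y < N) then y else y - N)%N.
Proof.
move=> h; case: ifP => h2; first by rewrite modn_small.
have -> : y = (y - N + N)%N by lia.
by rewrite modnDr modn_small; lia.
Qed.

Lemma cfr_uniq (N K : nat) (p : 'I_K -> {perm 'I_N}) (m m' : 'I_K) (tau : nat)
  (x1 x2 : 'I_N) : is_CFR p -> m != m' ->
  p m x1 = p m' (zshift x1 tau) -> p m x2 = p m' (zshift x2 tau) -> x1 = x2.
Proof.
move=> hA nm e1 e2; apply/eqP/negPn/negP => nx.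
have hN : (0 < N)%N by have := ltn_ord x1; lia.
pose d := ((x2 + N - x1) %% N)%N.
have hd : (0 < d < N)%N.
  apply/andP; split; last exact: ltn_pmod.
  have nx' : (nat_of_ord x1 <> nat_of_ord x2) by move=> h; apply: (negP nx); apply/eqP/val_inj.
  have := ltn_ord x1; have := ltn_ord x2.
  rewrite /d modn_2; last by have := ltn_ord x1; have := ltn_ord x2; lia.
  by case: ifP => h3; lia.
have s1 : zshift x1 d = x2.
  apply: val_inj => /=; rewrite /d modnDmr.
  have -> : (x1 + (x2 + N - x1) = x2 + N)%N by have := ltn_ord x1; lia.
  by rewrite modnDr modn_small.
have s2 : zshift (zshift x1 tau) d = zshift x2 tau.
  apply: val_inj => /=; rewrite /d modnDml modnDmr.
  have -> : (x1 + tau + (x2 + N - x1) = x2 + tau + N)%N by have := ltn_ord x1; lia.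
  by rewrite modnDr.
have := (hA d hd m m' x1 (zshift x1 tau)).1.
rewrite s1 s2 e1 e2 => /(_ erefl) [em _].
by move/eqP: nm.
Qed.

Section Two.
Variable N : nat.
Hypothesis N0 : (0 < N)%N.

Definition negN (x : 'I_N) : 'I_N := Ordinal (ltn_pmod (N - x) N0).

Lemma negmod (a : nat) : (a < N)%N -> ((N - a) %% N = if a == 0 then 0 else N - a)%N.
Proof.
move=> h; case: ifP => /eqP ha; first by rewrite ha subn0 modnn.
by rewrite modn_small; lia.
Qed.

Lemma negN_inj : injective negN.
Proof.
move=> x y /(congr1 val) /=; rewrite !negmod //.
move=> e; apply: val_inj => /=; move: e; have := ltn_ord x; have := ltn_ord y; do 2 case: ifP; lia.
Qed.

Definition pi2 (i : 'I_2) : {perm 'I_N} := if val i == 0 then 1%g else perm negN_inj.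

Lemma pi2E (i : 'I_2) (x : 'I_N) : val (pi2 i x) = if val i == 0 then val x else (N - x) %% N.
Proof. by rewrite /pi2; case: ifP => _; rewrite ?perm1 ?permE. Qed.

Lemma pi2_CFR : odd N -> is_CFR pi2.
Proof.
move=> hodd mm hm i j x y; split; last by case=> -> ->.
have hk : N = (N./2 * 2).+1 by rewrite muln2 -[LHS]odd_double_half hodd.
case=> /(congr1 val) ea /(congr1 val) eb.
rewrite !pi2E /= in ea eb.
suff [h1 h2] : nat_of_ord i = nat_of_ord j /\ nat_of_ord x = nat_of_ord y.
  by split; apply: val_inj.
have hx := ltn_ord x; have hy := ltn_ord y.
have hxm : ((x + mm) %% N < N)%N by rewrite ltn_pmod.
have hym : ((y + mm) %% N < N)%N by rewrite ltn_pmod.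
move: ea eb; rewrite !negmod // !modn_2; try lia.
case: i => [[|[|//]] hi]; case: j => [[|[|//]] hj] /=; do ! case: ifP; lia.
Qed.
End Two.

Lemma Ftilde_ge2 N K : (3 <= N)%N -> odd N -> is_Ftilde N K -> (2 <= K)%N.
Proof.
move=> h3 hodd [_ hmax].
have N0 : (0 < N)%N by lia.
exact: (hmax 2 _ (@pi2_CFR N N0 hodd)).
Qed.

Local Open Scope ring_scope.
Local Open Scope complex_scope.


Section Main.
Variable R : realType.
Local Notation C := R[i].
Local Notation normc := ComplexField.Normc.normc.
Variables (N K : nat) (p : 'I_K -> {perm 'I_N}).
Hypothesis N0 : (0 < N)%N.
Hypothesis hA : is_CFR p.
Local Notation w := (omega (N + 1) : C).
Local Notation L := (N * (N + 1))%N.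
Local Notation c := (cseq R N K p).

Lemma normc_nat n : normc (n%:R : C) = n%:R.
Proof.
have -> : (n%:R : C) = (n%:R : R)%:C by rewrite rmorph_nat.
by rewrite /= expr0n /= addr0 sqrtr_sqr ger0_norm // ler0n.
Qed.

Lemma normc_Pw z : normc ((N + 1)%:R * w ^ z) = (N + 1)%:R.
Proof. by rewrite ComplexField.Normc.normcM normc_nat normc_omegaz mulr1. Qed.

Lemma sum_normc (b : pred 'I_N) (F : 'I_N -> C) (B : R) :
  (forall x y, b x -> b y -> x = y) -> (forall x, b x -> normc (F x) = B) ->
  normc (\sum_x (if b x then F x else 0)) = if [exists x, b x] then B else 0.
Proof.
move=> u hF; case: existsP => [[x0 bx0]|nb].
  by rewrite (@sum_one R _ b F x0 bx0) ?hF // => x bx; apply: u.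
rewrite (@sum_none R _ b F) ?ComplexField.Normc.normc0 // => x.
by apply/negP => bx; apply: nb; exists x.
Qed.

Lemma cross_norm m m' tau : m != m' ->
  normc (pcorr L (c m) (c m') tau) =
  if [exists x, p m x == p m' (zshift x tau)] then (N + 1)%:R else 0.
Proof.
move=> nm; rewrite pcorrE //.
apply: sum_normc => [x y /eqP ex /eqP ey|x _]; last exact: normc_Pw.
exact: (@cfr_uniq N K p m m' tau x y hA nm ex ey).
Qed.

Lemma auto_norm m tau : (0 < tau < L)%N ->
  normc (pcorr L (c m) (c m) tau) = if (tau %% N == 0)%N then (N + 1)%:R else 0.
Proof.
move=> /andP[t0 tL]; rewrite pcorrE //.
case: ifP => /eqP ht; last first.
  rewrite (@sum_none R _ _ _) ?ComplexField.Normc.normc0 // => x.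
  rewrite (inj_eq (@perm_inj _ (p m))); apply/eqP => /(congr1 val) /=.
  rewrite -modnDmr modn_2; last by have := ltn_ord x; have := ltn_pmod tau N0; lia.
  have := ltn_ord x; have := ltn_pmod tau N0; case: ifP => h3; lia.
have zs : forall x : 'I_N, zshift x tau = x.
  move=> x; apply: val_inj => /=; rewrite -modnDmr ht addn0; exact: modn_small (ltn_ord x).
rewrite (eq_bigr (fun x => (N + 1)%:R * w ^ (- (p m x * tau)%N%:Z))); last first.
  by move=> x _; rewrite zs eqxx.
rewrite -mulr_sumr ComplexField.Normc.normcM normc_nat.
pose q := w ^ (- tau%:Z).
have -> : \sum_(x < N) w ^ (- (p m x * tau)%N%:Z) = \sum_(v < N) q ^+ v.
  rewrite [RHS](reindex_inj (@perm_inj _ (p m))); apply: eq_bigr => x _.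
  by rewrite exprnP exprz_exp; congr (_ ^ _); rewrite PoszM; ring.
have q1 : (q == 1) = false.
  rewrite omega_expz_eq1 ?wP // !unfold_in /= abszN.
  have et : tau = (tau %/ N * N)%N by rewrite {1}(divn_eq tau N) ht addn0.
  rewrite et Gauss_dvdl; last by rewrite addn1 coprimeSn.
  have k0 : (0 < tau %/ N)%N by rewrite lt0n; apply/eqP => h; move: t0; rewrite {1}et h.
  have kN : (tau %/ N < N + 1)%N by rewrite ltn_divLR // mulnC.
  apply/negP => /(dvdn_leq k0); lia.
have qN : q ^+ N.+1 = 1.
  apply/eqP; rewrite exprnP exprz_exp omega_expz_eq1 ?wP //.
  by apply: dvdz_mull; rewrite -addn1 dvdzz.
have := @geom_sum R q N.+1 qN; rewrite q1 big_ord_recr /= => /eqP.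
rewrite addr_eq0 => /eqP ->.
rewrite normcN normc_exp normc_omegaz expr1n mulr1 //.
Qed.

Lemma P0 : (0 : R) <= (N + 1)%:R. Proof. exact: ler0n. Qed.

Lemma theta_aE : (0 < K)%N -> theta_a K L c = (N + 1)%:R.
Proof.
move=> K0; rewrite /theta_a; apply: bigmax_eq; first exact: P0.
- move=> m _; apply: bigmax_le; first exact: P0.
  move=> tau t0; rewrite auto_norm; last by rewrite t0 ltn_ord.
  by case: ifP => _; rewrite ?P0.
- exists (Ordinal K0) => //; apply: bigmax_eq; first exact: P0.
  + move=> tau t0; rewrite auto_norm; last by rewrite t0 ltn_ord.
    by case: ifP => _; rewrite ?P0.
  + have NL : (N < L)%N by rewrite -[X in (X < _)%N]muln1 ltn_pmul2l // addn1.
    exists (Ordinal NL) => //=.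
    by rewrite auto_norm ?modnn // N0 NL.
Qed.

Lemma theta_cE : (1 < K)%N -> theta_c K L c = (N + 1)%:R.
Proof.
move=> K1; have K0 : (0 < K)%N by lia.
have bnd : forall m m' tau, m != m' -> normc (pcorr L (c m) (c m') tau) <= (N + 1)%:R.
  by move=> m m' tau nm; rewrite cross_norm //; case: ifP => _; rewrite ?P0.
rewrite /theta_c; apply: bigmax_eq; first exact: P0.
- move=> m _; apply: bigmax_le; first exact: P0.
  move=> m' nm; apply: bigmax_le; first exact: P0.
  by move=> tau _; apply: bnd.
pose m0 := Ordinal K0; pose m1 := Ordinal K1.
have nm : m0 != m1 by [].
exists m0 => //; apply: bigmax_eq; first exact: P0.
  move=> m' nm'; apply: bigmax_le; first exact: P0.
  by move=> tau _; apply: bnd.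
exists m1 => //; apply: bigmax_eq; first exact: P0.
  by move=> tau _; apply: bnd.
pose x0 : 'I_N := Ordinal N0.
pose y := ((p m1)^-1 (p m0 x0))%g.
have yL : (y < L)%N.
  apply: (leq_trans (ltn_ord y)); rewrite -[X in (X <= _)%N]muln1 leq_pmul2l //.
  by rewrite addn1.
exists (Ordinal yL) => //.
rewrite cross_norm //; case: existsP => // [[]]; exists x0.
have -> : zshift x0 (Ordinal yL) = y.
  by apply: val_inj; rewrite /= add0n modn_small.
by rewrite permKV.
Qed.

Lemma fdual_part m j : (j < L)%N ->
  ((exists2 a : nat, (a < N)%N & j = (1 + a * (N + 1))%N) ->
     fdual L (c m) j = 0) /\
  (~ (exists2 a : nat, (a < N)%N & j = (1 + a * (N + 1))%N) ->
     normc (fdual L (c m) j) = Num.sqrt ((N + 1)%:R / N%:R)).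
Proof.
move=> jL.
have P1 : (1 < N + 1)%N by rewrite addn1 ltnS.
have Om : (exists2 a : nat, (a < N)%N & j = (1 + a * (N + 1))%N) <-> (j %% (N + 1) == 1)%N.
  split => [[a _ ->]|/eqP h].
    by rewrite addnC modnMDl modn_small.
  exists (j %/ (N + 1))%N; first by rewrite ltn_divLR // ?wP.
  by rewrite {1}(divn_eq j (N + 1)) h addnC.
have uq : forall x y : 'I_N, ((N + 1) %| p m x + j)%N -> ((N + 1) %| p m y + j)%N -> x = y.
  move=> x y; rewrite /dvdn => hx hy.
  have : (p m x + j == p m y + j %[mod N + 1])%N by rewrite (eqP hx) (eqP hy).
  rewrite eqn_modDr !modn_small; last 2 first.
  - by have := ltn_ord (p m y); lia.
  - by have := ltn_ord (p m x); lia.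
  by move=> /eqP /val_inj /perm_inj.
rewrite Om fdualE //.
split => [/eqP h1|/negP h1].
  rewrite (@sum_none R _ _ _) ?mulr0 // => x.
  rewrite /dvdn -modnDmr h1 modn_small; first by rewrite addn1.
  by have := ltn_ord (p m x); lia.
rewrite ComplexField.Normc.normcM (sum_normc _ _ (N + 1)%:R) //; last first.
  by move=> x _; rewrite ComplexField.Normc.normcM normc_nat normc_omegaz mulr1.
have -> : [exists x, ((N + 1) %| p m x + j)%N].
  pose r := (j %% (N + 1))%N.
  have hr : (r < N + 1)%N by rewrite ltn_pmod ?(wP N).
  pose v := ((N + 1 - r) %% (N + 1))%N.
  have vN : (v < N)%N.
    by rewrite /v (@negmod (N + 1) (wP N) r hr); move: h1; rewrite -/r; case: ifP => /eqP; lia.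
  apply/existsP; exists (((p m)^-1)%g (Ordinal vN)); rewrite permKV /=.
  rewrite /dvdn -modnDmr -/r /v (@negmod (N + 1) (wP N) r hr).
  case: ifP => /eqP hr0; first by rewrite hr0 mod0n.
  by rewrite subnK ?modnn // ltnW.
rewrite /= expr0n /= addr0 sqrtr_sqr ger0_norm ?invr_ge0 ?sqrtr_ge0 //.
set l := _ * _.
have l0 : 0 <= l by rewrite mulr_ge0 ?invr_ge0 ?sqrtr_ge0 ?ler0n.
rewrite -(ger0_norm l0) -sqrtr_sqr; congr Num.sqrt.
rewrite /l exprMn exprVn sqr_sqrtr ?ler0n // natrM.
have h1' : N%:R != 0 :> R by rewrite pnatr_eq0 -lt0n.
have h2 : (N + 1)%:R != 0 :> R by rewrite pnatr_eq0 addn1.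
field; rewrite h1' /=; by rewrite natrD in h2.
Qed.
End Main.

Theorem theorem3 (R : realType) (N K : nat) (pi : 'I_K -> {perm 'I_N})
  (hN3 : (3 <= N)%N) (hNodd : odd N)
  (hK : is_Ftilde N K) (hA : is_CFR pi) :
  let L := (N * (N + 1))%N in
  let c : 'I_K -> nat -> R[i] := fun m i =>
    match insub (i %% N)%N : option 'I_N with
    | Some x => omega (N + 1) ^+ (pi m x * i)
    | None => 0 (* unreachable: i %% N < N since N >= 3 *)
    end in
  [/\ theta_a K L c = (N + 1)%:R,
      theta_c K L c = (N + 1)%:R,
      theta_max K L c = (N + 1)%:R &
      forall m : 'I_K, forall j : nat, (j < L)%N ->
        ((exists2 a : nat, (a < N)%N & j = (1 + a * (N + 1))%N) ->
           fdual L (c m) j = 0) /\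
        (~ (exists2 a : nat, (a < N)%N & j = (1 + a * (N + 1))%N) ->
           ComplexField.Normc.normc (fdual L (c m) j) = Num.sqrt ((N + 1)%:R / N%:R))].
Proof.
have N0 : (0 < N)%N by apply: leq_trans hN3.
have K2 := Ftilde_ge2 N K hN3 hNodd hK.
have K0 : (0 < K)%N by apply: leq_trans K2.
move=> L c.
have ta : theta_a K L c = (N + 1)%:R := theta_aE R N K pi N0 K0.
have tc : theta_c K L c = (N + 1)%:R := theta_cE R N K pi N0 hA K2.
split => //.
- by rewrite /theta_max ta tc maxxx.
- by move=> m j jL; exact: (fdual_part R N K pi N0 m j jL).
Qed.
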